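(* Let $n\ge2$ and $g\in G$. Consider the linear maps $\mathcal{R},\mathcal{S}:\mathfrak{n}\to\mathbb{R}^{n-1}$ where $\mathcal{R}(X)$ is the vector of the last $n-1$ entries of the first row of $gXg^{-1}$ and $\mathcal{S}(X)$ is the vector of the last $n-1$ entries of the second row of $gXg^{-1}$. Then at least one of $\mathcal{R}$, $\mathcal{S}$ is invertible.
   Context: $G=\mathrm{SO}(1,n)$ realized as the group of $g\in\mathrm{SL}_{n+1}(\mathbb{R})$ with $g\begin{pmatrix}J&0\\0&I_{n-1}\end{pmatrix}g^T=\begin{pmatrix}J&0\\0&I_{n-1}\end{pmatrix}$, $J=\begin{pmatrix}0&1\\1&0\end{pmatrix}$ (the special isometry group of $2x_0x_1+x_2^2+\dots+x_n^2$). Its Lie algebra consists of block matrices $\begin{pmatrix}a&b\\c&d\end{pmatrix}$ with $a\in\mathbb{R}\,\mathrm{diag}(1,-1)$, $b\in M_{2\times(n-1)}(\mathbb{R})$ arbitrary, $c=-b^TJ$, $d=-d^T$. $\mathfrak{n}$ is the abelian subalgebra of elements $X(R)=\begin{pmatrix}0&b\\c&0\end{pmatrix}$ with $b=\begin{pmatrix}R\\0\end{pmatrix}$, $R\in M_{1\times(n-1)}(\mathbb{R})$, $c=-b^TJ$. *)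

(* Defs.v *)
From HB Require Import structures.
From mathcomp Require Import all_boot all_order all_algebra.
From mathcomp Require Import reals.
Set Implicit Arguments. Unset Strict Implicit. Unset Printing Implicit Defensive.
Import Order.TTheory GRing.Theory Num.Theory.
Local Open Scope ring_scope.

(* Work with n = m + 1, i.e. m = n - 1; matrices are (2 + m) x (2 + m). *)
Section SO1n.
Variable R : realType.
Variable m : nat.

Definition Jmx : 'M[R]_2 := \matrix_(i < 2, j < 2) (i != j)%:R.

(* the form  2 x0 x1 + x2^2 + ... + xn^2 :  diag(J, I_{n-1}) *)
Definition Qmx : 'M[R]_(2 + m) := block_mx Jmx 0 0 1%:M.

Definition inG (g : 'M[R]_(2 + m)) : Prop :=
  g *m Qmx *m g^T = Qmx /\ \det g = 1.

Definition bmx (r : 'rV[R]_m) : 'M[R]_(2, m) := col_mx r 0.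

(* X(R) = [[0, b], [c, 0]] with c = - b^T J ; elements of the abelian subalgebra n *)
Definition Xn (r : 'rV[R]_m) : 'M[R]_(2 + m) :=
  block_mx 0 (bmx r) (- ((bmx r)^T *m Jmx)) 0.

Definition conjX (g : 'M[R]_(2 + m)) (r : 'rV[R]_m) : 'M[R]_(2 + m) :=
  g *m Xn r *m invmx g.

Definition Rmap (g : 'M[R]_(2 + m)) (r : 'rV[R]_m) : 'rV[R]_m :=
  \row_(j < m) conjX g r (lshift m (0 : 'I_2)) (rshift 2 j).

Definition Smap (g : 'M[R]_(2 + m)) (r : 'rV[R]_m) : 'rV[R]_m :=
  \row_(j < m) conjX g r (lshift m (1 : 'I_2)) (rshift 2 j).

End SO1n.

(* Main.v *)
Require Import Defs.
From HB Require Import structures.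
From mathcomp Require Import all_boot all_order all_algebra.
From mathcomp Require Import reals.
From mathcomp Require Import ring.
Set Implicit Arguments. Unset Strict Implicit. Unset Printing Implicit Defensive.
Import Order.TTheory GRing.Theory Num.Theory.
Local Open Scope ring_scope.


Lemma JJ (R : realType) : Jmx R *m Jmx R = 1%:M.
Proof.
apply/matrixP=> i j; rewrite !mxE !big_ord_recr big_ord0 /= !mxE.
case: i => [[|[|i]] Hi] //; case: j => [[|[|j]] Hj] //=; rewrite ?mul0r ?mulr0 ?mul1r ?add0r ?addr0 //.
Qed.

Lemma Jtr (R : realType) : (Jmx R)^T = Jmx R.
Proof. by apply/matrixP=> i j; rewrite !mxE eq_sym. Qed.

Lemma QQ (R : realType) m : Qmx R m *m Qmx R m = 1%:M.
Proof.
rewrite /Qmx mulmx_block !mulmx0 !mul0mx !addr0 !add0r mulmx1 JJ.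
by rewrite -scalar_mx_block.
Qed.

Lemma Qtr (R : realType) m : (Qmx R m)^T = Qmx R m.
Proof. by rewrite /Qmx tr_block_mx Jtr !trmx0 trmx1. Qed.

Lemma QrE (R : realType) m k (Z : 'M[R]_(k, 2 + m)) i j :
  (Z *m Qmx R m) i (rshift 2 j) = Z i (rshift 2 j).
Proof.
rewrite -[Z]hsubmxK /Qmx mul_row_block !mulmx0 add0r mulmx1 !row_mxEr.
by [].
Qed.


Definition e0 (R : realType) : 'cV[R]_2 := col_mx (1%:M : 'M[R]_1) 0.
Definition uu (R : realType) m : 'cV[R]_(2 + m) := col_mx (e0 R) 0.
Definition vv (R : realType) m (r : 'rV[R]_m) : 'cV[R]_(2 + m) := col_mx 0 r^T.

Lemma XQ (R : realType) m (r : 'rV[R]_m) :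
  Xn r *m Qmx R m = uu R m *m (vv r)^T - vv r *m (uu R m)^T.
Proof.
rewrite /Xn /Qmx mulmx_block !mulmx0 !mul0mx !addr0 !add0r mulmx1.
rewrite /uu /vv !tr_col_mx !trmx0 trmxK !mul_col_row !mulmx0 !mul0mx.
rewrite opp_block_mx !oppr0 add_block_mx !addr0 !add0r.
have -> : e0 R *m r = bmx r.
  have := mul_col_mx (1%:M : 'M[R]_1) (0 : 'M[R]_(1,1)) r.
  by rewrite mul1mx mul0mx; apply.
have -> : r^T *m (e0 R)^T = (bmx r)^T.
  have E1 : (e0 R)^T = row_mx (1%:M : 'M[R]_1) (0 : 'M[R]_(1,1)).
    by have := tr_col_mx (1%:M : 'M[R]_1) (0 : 'M[R]_(1,1)); rewrite trmx0 trmx1; apply.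
  have E2 : (bmx r)^T = row_mx r^T (0 : 'M[R]_(m,1)).
    by have := tr_col_mx r (0 : 'M[R]_(1,m)); rewrite trmx0; apply.
  rewrite E1 E2; have := mul_mx_row r^T (1%:M : 'M[R]_1) (0 : 'M[R]_(1,1)).
  by rewrite mulmx1 mulmx0; apply.
by rewrite mulNmx -mulmxA JJ mulmx1.
Qed.

Lemma g_unit (R : realType) m (g : 'M[R]_(2 + m)) : inG g -> g \in unitmx.
Proof. by case=> _ hd; rewrite unitmxE hd unitr1. Qed.

Lemma g_inv (R : realType) m (g : 'M[R]_(2 + m)) : inG g ->
  invmx g = Qmx R m *m g^T *m Qmx R m.
Proof.
move=> hg; have hu := g_unit hg; case: hg => hQ _.
have h1 : g *m (Qmx R m *m g^T *m Qmx R m) = 1%:M by rewrite !mulmxA hQ QQ.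
by rewrite -[invmx g]mulmx1 -h1 (mulmxA (invmx g)) mulVmx // mul1mx.
Qed.

Lemma gTQg (R : realType) m (g : 'M[R]_(2 + m)) : inG g ->
  g^T *m Qmx R m *m g = Qmx R m.
Proof.
move=> hg; have hu := g_unit hg.
have h1 : (Qmx R m *m g^T *m Qmx R m) *m g = 1%:M by rewrite -(g_inv hg) mulVmx.
have e : g^T *m Qmx R m *m g = Qmx R m *m ((Qmx R m *m g^T *m Qmx R m) *m g).
  by rewrite !mulmxA QQ mul1mx.
by rewrite e h1 mulmx1.
Qed.

Lemma YQ (R : realType) m (g : 'M[R]_(2 + m)) r : inG g ->
  conjX g r *m Qmx R m = (g *m uu R m) *m (g *m vv r)^T - (g *m vv r) *m (g *m uu R m)^T.
Proof.
move=> hg; rewrite /conjX g_inv //.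
have -> : g *m Xn r *m (Qmx R m *m g^T *m Qmx R m) *m Qmx R m = g *m (Xn r *m Qmx R m) *m g^T.
  by rewrite -!mulmxA QQ mulmx1.
rewrite XQ.
by rewrite !trmx_mul mulmxBr mulmxBl !mulmxA.
Qed.

Lemma RmapE (R : realType) m (g : 'M[R]_(2 + m)) r (c : 'I_2) j : inG g ->
  conjX g r (lshift m c) (rshift 2 j) =
  (g *m uu R m) (lshift m c) 0 * (g *m vv r) (rshift 2 j) 0
  - (g *m vv r) (lshift m c) 0 * (g *m uu R m) (rshift 2 j) 0.
Proof.
move=> hg; rewrite -QrE YQ // !mxE !big_ord1 !mxE.
by [].
Qed.


Lemma e00 (R : realType) : e0 R 0 0 = 1.
Proof. rewrite /e0 !mxE; case: splitP => [i _|i hi]; first by rewrite ord1 mxE.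
by case: i hi. Qed.
Lemma e01 (R : realType) : e0 R 1 0 = 0.
Proof. rewrite /e0 !mxE; case: splitP => [i hi|i _]; last by rewrite mxE.
by case: i hi => [[]]. Qed.

Definition BB (R : realType) m (p q : 'cV[R]_(2 + m)) := (p^T *m Qmx R m *m q) 0 0.

Lemma BBE (R : realType) m (p q : 'cV[R]_(2 + m)) :
  BB p q = p (lshift m 0) 0 * q (lshift m 1) 0 + p (lshift m 1) 0 * q (lshift m 0) 0
    + \sum_(j < m) p (rshift 2 j) 0 * q (rshift 2 j) 0.
Proof.
rewrite /BB -[p]vsubmxK -[q]vsubmxK tr_col_mx /Qmx mul_row_block !mulmx0 addr0 add0r mulmx1.
rewrite mul_row_col !col_mxEu mxE.
congr (_ + _).
  rewrite !mxE !big_ord_recr !big_ord0 /= !mxE !big_ord_recr !big_ord0 /= !mxE /=.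
  have -> : widen_ord (leqnSn 1) ord_max = 0 :> 'I_2 by apply/val_inj.
  have -> : (ord_max : 'I_2) = 1 by apply/val_inj.
  ring.
by rewrite !vsubmxK mxE; apply: eq_bigr => j _; rewrite !mxE.
Qed.


Lemma alg (R : realType) (a0 a1 x0 x1 SA SXA SXX N : R) : a0 != 0 ->
  2*a0*a1 + SA = 0 -> x0*a1 + x1*a0 + SXA = 0 -> 2*x0*x1 + SXX = N ->
  a0*SXA = x0*SA -> a0^+2*SXX = x0^+2*SA -> N = 0.
Proof.
move=> ha E1 E2 E3 H1 H2.
have K : a0*(a0*x1 - x0*a1) = 0.
  have -> : a0*(a0*x1 - x0*a1) = a0*(x0*a1+x1*a0+SXA) - x0*(2*a0*a1+SA) - (a0*SXA - x0*SA) by ring.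
  by rewrite E1 E2 H1 subrr !mulr0 !subr0.
have : a0^+2 * N = 0.
  have -> : a0^+2 * N = 2*x0*(a0*(a0*x1 - x0*a1)) + x0^+2*(2*a0*a1+SA) + (a0^+2*SXX - x0^+2*SA).
    by rewrite -E3; ring.
  by rewrite K E1 H2 subrr !mulr0 !addr0.
by move/eqP; rewrite mulf_eq0 expf_eq0 /= (negbTE ha) /= => /eqP.
Qed.

Lemma sumsq0 (R : realType) m (r : 'rV[R]_m) : \sum_(j < m) r 0 j ^+ 2 = 0 -> r = 0.
Proof.
move=> h; apply/rowP => j; rewrite mxE.
apply/eqP; rewrite -sqrf_eq0; apply/eqP.
exact: (psumr_eq0P (fun j _ => sqr_ge0 (r 0 j)) h).
Qed.


Lemma uuL (R : realType) m c : uu R m (lshift m c) 0 = e0 R c 0.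
Proof. by rewrite /uu col_mxEu. Qed.
Lemma uuR (R : realType) m j : uu R m (rshift 2 j) 0 = 0.
Proof. by rewrite /uu col_mxEd mxE. Qed.
Lemma vvL (R : realType) m (r : 'rV[R]_m) c : vv r (lshift m c) 0 = 0.
Proof. by rewrite /vv col_mxEu mxE. Qed.
Lemma vvR (R : realType) m (r : 'rV[R]_m) j : vv r (rshift 2 j) 0 = r 0 j.
Proof. by rewrite /vv col_mxEd mxE. Qed.

Lemma BBg (R : realType) m (g : 'M[R]_(2 + m)) p q : inG g ->
  BB (g *m p) (g *m q) = BB p q.
Proof. by move=> hg; rewrite /BB trmx_mul -!mulmxA (mulmxA g^T) (mulmxA (g^T *m _)) gTQg. Qed.

Lemma Buu (R : realType) m : BB (uu R m) (uu R m) = 0.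
Proof.
rewrite BBE !uuL e00 e01 mulr0 mul0r !add0r.
by rewrite big1 // => j _; rewrite uuR mul0r.
Qed.

Lemma Bvu (R : realType) m (r : 'rV[R]_m) : BB (vv r) (uu R m) = 0.
Proof.
rewrite BBE !vvL !mul0r !add0r.
by rewrite big1 // => j _; rewrite uuR mulr0.
Qed.

Lemma Bvv (R : realType) m (r : 'rV[R]_m) : BB (vv r) (vv r) = \sum_(j < m) r 0 j ^+ 2.
Proof.
rewrite BBE !vvL !mul0r !add0r.
by apply: eq_bigr => j _; rewrite vvR expr2.
Qed.

Lemma xE (R : realType) m (g : 'M[R]_(2 + m)) r k :
  (g *m vv r) k 0 = \sum_(l < m) g k (rshift 2 l) * r 0 l.
Proof.
rewrite mxE big_split_ord /= big1 ?add0r; last by move=> i _; rewrite vvL mulr0.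
by apply: eq_bigr => l _; rewrite vvR.
Qed.


Lemma kern (R : realType) m (g : 'M[R]_(2 + m)) (r : 'rV[R]_m) (c : 'I_2) : inG g ->
  let a := g *m uu R m in let x := g *m vv r in
  a (lshift m c) 0 != 0 ->
  (forall j, a (lshift m c) 0 * x (rshift 2 j) 0 - x (lshift m c) 0 * a (rshift 2 j) 0 = 0) ->
  r = 0.
Proof.
have hc : c = 0 \/ c = 1.
  move: (ltn_ord c); case E: (nat_of_ord c) => [|[|k]] // _; [left|right]; by apply/val_inj; rewrite /= E.
move=> hg a x ha hj.
have Baa : BB a a = 0 by rewrite BBg // Buu.
have Bxa : BB x a = 0 by rewrite BBg // Bvu.
have Bxx : BB x x = \sum_(j < m) r 0 j ^+ 2 by rewrite BBg // Bvv.
rewrite BBE in Baa; rewrite BBE in Bxa; rewrite BBE in Bxx.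
have hj' : forall j, a (lshift m c) 0 * x (rshift 2 j) 0 = x (lshift m c) 0 * a (rshift 2 j) 0.
  by move=> j; apply/eqP; rewrite -subr_eq0 hj.
set SA := \sum_(j < m) a (rshift 2 j) 0 * a (rshift 2 j) 0 in Baa.
set SXA := \sum_(j < m) x (rshift 2 j) 0 * a (rshift 2 j) 0 in Bxa.
set SXX := \sum_(j < m) x (rshift 2 j) 0 * x (rshift 2 j) 0 in Bxx.
have H1 : a (lshift m c) 0 * SXA = x (lshift m c) 0 * SA.
  rewrite /SXA /SA !mulr_sumr; apply: eq_bigr => j _.
  by rewrite mulrA hj' mulrA.
have H2 : a (lshift m c) 0 ^+ 2 * SXX = x (lshift m c) 0 ^+ 2 * SA.
  rewrite /SXX /SA !mulr_sumr; apply: eq_bigr => j _.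
  have -> : a (lshift m c) 0 ^+ 2 * (x (rshift 2 j) 0 * x (rshift 2 j) 0) =
     (a (lshift m c) 0 * x (rshift 2 j) 0) * (a (lshift m c) 0 * x (rshift 2 j) 0) by ring.
  rewrite hj'; ring.
apply: sumsq0.
clearbody SA SXA SXX; move: Baa Bxa Bxx H1 H2 ha; clear hj hj'.
case: hc => ->.
all: set a0 := a (lshift m 0) 0; set a1 := a (lshift m 1) 0.
all: set x0 := x (lshift m 0) 0; set x1 := x (lshift m 1) 0.
all: clearbody a0 a1 x0 x1; move=> Baa Bxa Bxx H1 H2 ha.
- have E1 : 2*a0*a1 + SA = 0 by rewrite -Baa; ring.
  have E3 : 2*x0*x1 + SXX = \sum_(j < m) r 0 j ^+ 2 by rewrite -Bxx; ring.
  exact: (@alg R a0 a1 x0 x1 SA SXA SXX _ ha E1 Bxa E3 H1 H2).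
- have E1 : 2*a1*a0 + SA = 0 by rewrite -Baa; ring.
  have E2 : x1*a0 + x0*a1 + SXA = 0 by rewrite -Bxa; ring.
  have E3 : 2*x1*x0 + SXX = \sum_(j < m) r 0 j ^+ 2 by rewrite -Bxx; ring.
  exact: (@alg R a1 a0 x1 x0 SA SXA SXX _ ha E1 E2 E3 H1 H2).
Qed.


Lemma FmapM (R : realType) m (g : 'M[R]_(2 + m)) r c a : inG g -> g *m uu R m = a ->
  \row_j conjX g r (lshift m c) (rshift 2 j) =
  r *m \matrix_(l < m, j < m) (a (lshift m c) 0 * g (rshift 2 j) (rshift 2 l)
                                - g (lshift m c) (rshift 2 l) * a (rshift 2 j) 0).
Proof.
move=> hg ha; apply/rowP => j; rewrite mxE RmapE // ha !xE mxE.
rewrite mulr_sumr mulr_suml -sumrB; apply: eq_bigr => l _; rewrite mxE; ring.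
Qed.

Lemma bij_mx (R : realType) m (M : 'M[R]_m) :
  (forall r : 'rV[R]_m, r *m M = 0 -> r = 0) -> bijective (fun r : 'rV[R]_m => r *m M).
Proof.
move=> h.
have hu : M \in unitmx.
  rewrite -row_free_unit -kermx_eq0; apply/eqP/row_matrixP => i; rewrite row0.
  by apply: h; apply/sub_kermxP; exact: row_sub.
by exists (fun r => r *m invmx M) => r /=; [rewrite mulmxK | rewrite mulmxKV].
Qed.

Lemma bijF (R : realType) m (g : 'M[R]_(2 + m)) (c : 'I_2) : inG g ->
  (g *m uu R m) (lshift m c) 0 != 0 ->
  bijective (fun r => \row_j conjX g r (lshift m c) (rshift 2 j)).
Proof.
move=> hg hc.
set a := g *m uu R m in hc.
have ha : g *m uu R m = a by [].
apply: (eq_bij (bij_mx _)) => [r hr|r]; last by rewrite (FmapM _ _ hg ha).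
apply: (kern hg hc) => j.
have := congr1 (fun v : 'rV[R]_m => v 0 j) hr.
by rewrite -(FmapM _ _ hg ha) mxE RmapE // => ->; rewrite mxE.
Qed.


Theorem lemma6 (R : realType) (m : nat) (hm : (1 <= m)%N)
  (g : 'M[R]_(2 + m)) (hg : inG g) :
  bijective (Rmap g) \/ bijective (Smap g).
Proof.
have Baa : BB (g *m uu R m) (g *m uu R m) = 0 by rewrite BBg // Buu.
rewrite BBE in Baa.
set a := g *m uu R m in Baa.
case: (eqVneq (a (lshift m 0) 0) 0) => h0; last by left; exact: (bijF hg h0).
case: (eqVneq (a (lshift m 1) 0) 0) => h1; last by right; exact: (bijF hg h1).
exfalso.
rewrite h0 h1 !mul0r !add0r in Baa.
have hd : forall j, a (rshift 2 j) 0 = 0.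
  move=> j; apply/eqP; rewrite -sqrf_eq0; apply/eqP.
  exact: (psumr_eq0P (fun j _ => sqr_ge0 (a (rshift 2 j) 0)) (etrans (eq_bigr _ (fun j _ => esym (expr2 _))) Baa)).
have a0 : a = 0.
  apply/matrixP => i k; rewrite ord1 [RHS]mxE.
  case: (split_ordP i) => i' ->; last exact: hd.
  have [->|->] : i' = 0 \/ i' = 1.
    move: (ltn_ord i'); case E: (nat_of_ord i') => [|[|k']] // _; [left|right]; by apply/val_inj; rewrite /= E.
  - exact: h0.
  - exact: h1.
have : uu R m = 0.
  by rewrite -[uu R m]mul1mx -(mulVmx (g_unit hg)) -mulmxA -/a a0 mulmx0.
move/(congr1 (fun v : 'cV[R]_(2 + m) => v (lshift m 0) 0)); rewrite uuL e00 mxE.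
by move/eqP; rewrite oner_eq0.
Qed.
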